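(* Let $G$ be a finite simple graph with threshold assignment $\tau$. Let $H$ be a triangle-free $\tau$-resistant subgraph of $G$ and let $uv$ be an edge with $u,v\in V(H)$. Define $\tau'$ by $\tau'(w)=\tau(w)$ for $w\notin V(H)$, $\tau'(w)=0$ for $w\in V(H)\setminus\{u,v\}$, $\tau'(v)=deg_G(v)$ and $\tau'(u)=deg_G(u)$. Then $\overline{\tau'}\le\overline{\tau}$.
   Context: A threshold assignment is a function $\tau:V(G)\to\{0,1,2,\dots\}$ with average $\overline{\tau}=\sum_v\tau(v)/|V(G)|$. An induced subgraph $K$ of $G$ is $\tau$-resistant if $deg_K(v)\ge deg_G(v)-\tau(v)+1$ for every vertex $v\in K$. *)

(* Defs.v *)
From mathcomp Require Import all_boot all_order all_algebra.
Set Implicit Arguments. Unset Strict Implicit. Unset Printing Implicit Defensive.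
Import Order.TTheory GRing.Theory Num.Theory.

Definition simple_graph (T : finType) (e : rel T) : Prop :=
  symmetric e /\ irreflexive e.

Definition deg (T : finType) (e : rel T) (v : T) : nat := #|[set w | e v w]|.

Definition deg_in (T : finType) (e : rel T) (K : {set T}) (v : T) : nat :=
  #|[set w in K | e v w]|.

Definition avg (T : finType) (tau : T -> nat) : rat :=
  ((\sum_(v : T) tau v)%:R / #|T|%:R)%R.

Definition resistant (T : finType) (e : rel T) (tau : T -> nat) (K : {set T}) : Prop :=
  forall v, v \in K -> ((deg e v)%:Z - (tau v)%:Z + 1 <= (deg_in e K v)%:Z)%R.

Definition triangle_free (T : finType) (e : rel T) (K : {set T}) : Prop :=
  forall x y z, x \in K -> y \in K -> z \in K -> ~ [&& e x y, e y z & e x z].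

Definition tau' (T : finType) (e : rel T) (tau : T -> nat) (H : {set T}) (u v : T) (w : T) : nat :=
  if w \notin H then tau w
  else if w == u then deg e u
  else if w == v then deg e v
  else 0.

(* Main.v *)
Require Import Defs.
From mathcomp Require Import all_boot all_order all_algebra.
From mathcomp Require Import zify.
Import Order.TTheory GRing.Theory Num.Theory.

Lemma sum_ind (T : finType) (H A : {set T}) :
  \sum_(w in H) ((w \in A) : nat) = #|H :&: A|.
Proof.
rewrite -sum1_card big_mkcond /= [RHS]big_mkcond /=.
apply: eq_bigr => w _; rewrite in_setI; by case: (w \in H); case: (w \in A).
Qed.

Theorem lemma2 (T : finType) (e : rel T) (tau : T -> nat) (H : {set T}) (u v : T) :
  simple_graph e ->
  resistant e tau H ->
  triangle_free e H ->
  u \in H -> v \in H -> e u v ->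
  (avg (tau' e tau H u v) <= avg tau)%R.
Proof.
move=> [esym eirr] res tri Hu Hv euv.
have uv : u != v by apply/eqP => E; move: euv; rewrite E eirr.
have dle : forall w, deg_in e H w <= deg e w.
  move=> w; apply: subset_leq_card; apply/subsetP => x; rewrite !inE => /andP[_ ->] //.
have res' : forall w, w \in H -> deg e w + 1 <= tau w + deg_in e H w.
  move=> w Hw; have := res w Hw; have := dle w; lia.
set A := [set w in H | e u w]; set B := [set w in H | e v w].
have key : deg e u + deg e v <= \sum_(w in H) tau w.
  have pw : forall w, w \in H -> (w == u) * tau u + (w == v) * tau v
       + ((w \in A :\ v) : nat) + ((w \in B :\ u) : nat) <= tau w.
    move=> w Hw; have t1 : 1 <= tau w by have := res' w Hw; have := dle w; lia.
    rewrite !inE Hw /=.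
    have [->|wu] := eqVneq w u.
      by rewrite ?eqxx ?(negbTE uv) ?eirr ?andbF /=; lia.
    have [->|wv] := eqVneq w v.
      by rewrite ?eqxx ?(eq_sym v u) ?(negbTE uv) ?eirr ?andbF /=; lia.
    have : ~~ (e u w && e v w).
      apply/negP => /andP[h1 h2]; apply: (tri u v w Hu Hv Hw); rewrite euv h2 h1 //.
    by case: (e u w); case: (e v w) => //=; lia.
  have := @leq_sum _ (index_enum T) (fun w => w \in H) _ _ pw; rewrite !big_split /= !sum_ind.
  rewrite (bigD1 u) //= big1 ?eqxx; last by move=> i /andP[_ /negbTE ->].
  rewrite (bigD1 v) //= big1 ?eqxx; last by move=> i /andP[_ /negbTE ->].
  have cA : #|H :&: (A :\ v)| + 1 = deg_in e H u.
    have -> : H :&: (A :\ v) = A :\ v.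
      apply/setIidPr/subsetP => x; rewrite !inE => /and3P[_ -> _] //.
    rewrite [deg_in _ _ _](cardsD1 v) /deg_in -/A; rewrite inE Hv euv /=; lia.
  have cB : #|H :&: (B :\ u)| + 1 = deg_in e H v.
    have -> : H :&: (B :\ u) = B :\ u.
      apply/setIidPr/subsetP => x; rewrite !inE => /and3P[_ -> _] //.
    rewrite [deg_in _ _ v](cardsD1 u) /deg_in -/B; rewrite inE Hu esym euv /=; lia.
  have := res' u Hu; have := res' v Hv; lia.
have hs : \sum_(w : T) tau' e tau H u v w <= \sum_(w : T) tau w.
  rewrite [X in X <= _](bigID (fun w => w \in H)) [X in _ <= X](bigID (fun w => w \in H)) /=.
  have -> : \sum_(i | i \notin H) tau' e tau H u v i = \sum_(i | i \notin H) tau i.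
    by apply: eq_bigr => i hi; rewrite /tau' hi.
  suff : \sum_(i in H) tau' e tau H u v i = deg e u + deg e v by move=> ->; rewrite leq_add2r.
  rewrite (bigD1 u) //= (bigD1 v) /=; last by rewrite Hv eq_sym uv.
  rewrite big1; last first.
    move=> i /andP[/andP[Hi iu] iv]; by rewrite /tau' Hi /= (negbTE iu) (negbTE iv).
  by rewrite /tau' Hu Hv /= eqxx eq_sym (negbTE uv) eqxx addn0.
rewrite /avg ler_wpM2r ?invr_ge0 ?ler0n // ler_nat //.
Qed.
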